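(* For every odd $n>1$, the algebra $\mathbf{A}_n$ does not have a minority term.
   Context: Let $[n]=\{1,\dots,n\}$ and let $m$ be the minority operation on $[n]$ given by $m(x,y,z)=x$ if $y=z$, $m(x,y,z)=y$ if $x=z$, and $m(x,y,z)=z$ otherwise. On $\{0,1,2,3\}$, $+,-$ denote arithmetic modulo 4 and $\oplus$ denotes bitwise XOR of 2-bit binary representations. Let $A_n=[n]\times\{0,1,2,3\}$. For $i\in[n]$ define the ternary operation $t_i$ on $A_n$ by $t_i((a_1,b_1),(a_2,b_2),(a_3,b_3))=(i,\,b_1-b_2+b_3)$ if $a_1=a_2=a_3=i$, and $=(m(a_1,a_2,a_3),\,b_1\oplus b_2\oplus b_3)$ otherwise. The algebra $\mathbf{A}_n$ has universe $A_n$ and basic operations $t_1,\dots,t_n$. A minority term of an algebra is a ternary term whose interpretation satisfies $m(y,x,x)\approx m(x,y,x)\approx m(x,x,y)\approx y$. *)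

(* Defs.v *)
From mathcomp Require Import all_boot.
Set Implicit Arguments. Unset Strict Implicit. Unset Printing Implicit Defensive.

(* [n] is represented by 'I_n (element k : 'I_n stands for k+1 in [n]);
   {0,1,2,3} is represented by 'I_4. *)

Definition minority {T : eqType} (x y z : T) : T :=
  if y == z then x else if x == z then y else z.

Definition zsub_add (b1 b2 b3 : 'I_4) : 'I_4 :=
  inord ((b1 + (4 - b2) + b3) %% 4).

Definition bxor3 (b1 b2 b3 : 'I_4) : 'I_4 :=
  inord (Nat.lxor (Nat.lxor b1 b2) b3).

Definition An (n : nat) : finType := ('I_n * 'I_4)%type.

Definition t_op (n : nat) (i : 'I_n) (u v w : An n) : An n :=
  if [&& u.1 == i, v.1 == i & w.1 == i] then (i, zsub_add u.2 v.2 w.2)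
  else (minority u.1 v.1 w.1, bxor3 u.2 v.2 w.2).

Inductive term (n : nat) : Type :=
  | Var : 'I_3 -> term n
  | Op : 'I_n -> term n -> term n -> term n -> term n.

Fixpoint eval (n : nat) (t : term n) (x y z : An n) : An n :=
  match t with
  | Var k => if val k == 0 then x else if val k == 1 then y else z
  | Op i t1 t2 t3 => t_op i (eval t1 x y z) (eval t2 x y z) (eval t3 x y z)
  end.

Definition is_minority_term (n : nat) (t : term n) : Prop :=
  forall x y : An n,
    [/\ eval t y x x = y, eval t x y x = y & eval t x x y = y].

(* Main.v *)
Require Import Defs.
From HB Require Import structures.
From mathcomp Require Import all_boot zify.
From Stdlib Require PeanoNat.
Set Implicit Arguments. Unset Strict Implicit.

Definition lx (a b : nat) : nat := Nat.lxor a b.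
Lemma lxA : associative lx.
Proof. by move=> x y z; rewrite /lx PeanoNat.Nat.lxor_assoc. Qed.
Lemma lxC : commutative lx.
Proof. by move=> x y; rewrite /lx PeanoNat.Nat.lxor_comm. Qed.
Lemma lx0 : left_id 0 lx.
Proof. by move=> x; rewrite /lx PeanoNat.Nat.lxor_0_l. Qed.
Lemma lxx x : lx x x = 0.
Proof. by rewrite /lx PeanoNat.Nat.lxor_nilpotent. Qed.
HB.instance Definition _ := Monoid.isComLaw.Build nat 0 lx lxA lxC lx0.

Definition zsN (a b c : nat) := (a + (4 - b) + c) %% 4.
Definition bxN (a b c : nat) := lx (lx a b) c.
Definition hiN (d : nat) := (d == 0) || (d == 2).

Lemma bxN_lt : all (fun a => all (fun b => all (fun c => bxN a b c < 4) (iota 0 4)) (iota 0 4)) (iota 0 4).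
Proof. by vm_compute. Qed.

Lemma in4 (x : 'I_4) : nat_of_ord x \in iota 0 4.
Proof. by rewrite mem_iota ltn_ord. Qed.

Lemma zsE (a b c : 'I_4) : val (zsub_add a b c) = zsN a b c.
Proof. by rewrite /zsub_add /= inordK // ltn_mod. Qed.
Lemma bxE (a b c : 'I_4) : val (bxor3 a b c) = bxN a b c.
Proof.
rewrite /bxor3 /= inordK //.
exact: (allP (allP (allP bxN_lt _ (in4 a)) _ (in4 b)) _ (in4 c)).
Qed.

Definition L1b e1 e2 e3 z1 z2 z3 :=
  hiN (lx e1 z1) ==> hiN (lx e2 z2) ==> hiN (lx e3 z3) ==>
  (zsN e1 e2 e3 == lx (zsN z1 z2 z3) (lx (lx e1 z1) (lx (lx e2 z2) (lx e3 z3)))) &&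
  (bxN e1 e2 e3 == lx (bxN z1 z2 z3) (lx (lx e1 z1) (lx (lx e2 z2) (lx e3 z3)))).
Lemma L1all : all (fun e1 => all (fun e2 => all (fun e3 => all (fun z1 => all (fun z2 => all (fun z3 =>
   L1b e1 e2 e3 z1 z2 z3) (iota 0 4)) (iota 0 4)) (iota 0 4)) (iota 0 4)) (iota 0 4)) (iota 0 4).
Proof. by vm_compute. Qed.

Lemma L1 (e1 e2 e3 z1 z2 z3 : 'I_4) :
  hiN (lx e1 z1) -> hiN (lx e2 z2) -> hiN (lx e3 z3) ->
  zsN e1 e2 e3 = lx (zsN z1 z2 z3) (lx (lx e1 z1) (lx (lx e2 z2) (lx e3 z3))) /\
  bxN e1 e2 e3 = lx (bxN z1 z2 z3) (lx (lx e1 z1) (lx (lx e2 z2) (lx e3 z3))).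
Proof.
have := allP (allP (allP (allP (allP (allP L1all _ (in4 e1)) _ (in4 e2)) _ (in4 e3)) _ (in4 z1)) _ (in4 z2)) _ (in4 z3).
rewrite /L1b => H h1 h2 h3; move: H; rewrite h1 h2 h3 /= => /andP[/eqP -> /eqP ->]; by [].
Qed.

Lemma P2all : all (fun a => all (fun b => all (fun c => hiN (lx (zsN a b c) (bxN a b c))) (iota 0 4)) (iota 0 4)) (iota 0 4).
Proof. by vm_compute. Qed.
Lemma P2 (a b c : 'I_4) : hiN (lx (zsN a b c) (bxN a b c)).
Proof. exact: (allP (allP (allP P2all _ (in4 a)) _ (in4 b)) _ (in4 c)). Qed.

Lemma hiD x y : hiN x -> hiN y -> hiN (lx x y).
Proof. by move=> /orP[]/eqP-> /orP[]/eqP->; vm_compute. Qed.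

Lemma lxr0 x : lx x 0 = x.
Proof. by rewrite lxC lx0. Qed.
Lemma lxK x y : lx (lx x y) y = x.
Proof. by rewrite -lxA lxx lxC lx0. Qed.
Lemma lxKC x y : lx y (lx y x) = x.
Proof. by rewrite lxA lxx lx0. Qed.

Lemma iter_lx n c : iter n (lx c) 0 = if odd n then c else 0.
Proof.
elim: n => //= n ->; case: (odd n) => /=; first by rewrite lxx.
by rewrite lxC lx0.
Qed.

Lemma big_constlx n c : odd n -> \big[lx/0]_(a < n) c = c.
Proof. by move=> h; rewrite big_const_ord iter_lx h. Qed.

Lemma big_shape n (hodd : odd n) (i : 'I_n) (A B : nat) (D : 'I_n -> nat) :
  \big[lx/0]_(a < n) lx (lx B (if a == i then lx B A else 0)) (D a) = lx A (\big[lx/0]_(a < n) D a).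
Proof.
rewrite big_split /= big_split /= big_constlx // (bigD1 i) //= eqxx big1; last by move=> a /negbTE ->.
by rewrite lxr0 lxKC.
Qed.

Lemma big_D n (E1 E2 E3 : 'I_n -> nat) (Z1 Z2 Z3 : nat) (hodd : odd n) :
  \big[lx/0]_(a < n) lx (lx (E1 a) Z1) (lx (lx (E2 a) Z2) (lx (E3 a) Z3)) =
  lx (lx (\big[lx/0]_(a < n) E1 a) Z1) (lx (lx (\big[lx/0]_(a < n) E2 a) Z2) (lx (\big[lx/0]_(a < n) E3 a) Z3)).
Proof. by rewrite !big_split /= !big_constlx. Qed.

Fixpoint zeval (n : nat) (t : term n) (x y z : 'I_4) : 'I_4 :=
  match t with
  | Var k => if val k == 0 then x else if val k == 1 then y else z
  | Op i t1 t2 t3 => zsub_add (zeval t1 x y z) (zeval t2 x y z) (zeval t3 x y z)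
  end.

Lemma fst_block n (t : term n) (a : 'I_n) u0 u1 u2 :
  (eval t (a,u0) (a,u1) (a,u2)).1 = a.
Proof.
elim: t => [k|i t1 IH1 t2 IH2 t3 IH3] /=.
  by case: ifP => _ //; case: ifP.
rewrite /t_op IH1 IH2 IH3; case: ifP => /=.
  by move=> /and3P[/eqP -> _ _].
by rewrite /minority eqxx.
Qed.

Lemma snd_op n (i a : 'I_n) t1 t2 t3 u0 u1 u2 :
  (eval (Op i t1 t2 t3) (a,u0) (a,u1) (a,u2)).2 =
  if a == i then zsub_add (eval t1 (a,u0) (a,u1) (a,u2)).2 (eval t2 (a,u0) (a,u1) (a,u2)).2 (eval t3 (a,u0) (a,u1) (a,u2)).2
  else bxor3 (eval t1 (a,u0) (a,u1) (a,u2)).2 (eval t2 (a,u0) (a,u1) (a,u2)).2 (eval t3 (a,u0) (a,u1) (a,u2)).2.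
Proof. by rewrite /= /t_op !fst_block; case: (a == i). Qed.

Lemma main n (hodd : odd n) (t : term n) (u0 u1 u2 : 'I_4) :
  (forall a : 'I_n, hiN (lx (val (eval t (a,u0) (a,u1) (a,u2)).2) (val (zeval t u0 u1 u2)))) /\
  \big[lx/0]_(a < n) val (eval t (a,u0) (a,u1) (a,u2)).2 = val (zeval t u0 u1 u2).
Proof.
elim: t => [k|i t1 [H1 S1] t2 [H2 S2] t3 [H3 S3]].
  have E : forall a : 'I_n, (eval (@Var n k) (a,u0) (a,u1) (a,u2)).2 = zeval (@Var n k) u0 u1 u2.
    by move=> a /=; case: ifP => _ //; case: ifP.
  split; first by move=> a; rewrite E lxx.
  by rewrite (eq_bigr _ (fun a _ => congr1 val (E a))) big_constlx.
set E1 := fun a : 'I_n => val (eval t1 (a,u0) (a,u1) (a,u2)).2 in H1 S1 *.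
set E2 := fun a : 'I_n => val (eval t2 (a,u0) (a,u1) (a,u2)).2 in H2 S2 *.
set E3 := fun a : 'I_n => val (eval t3 (a,u0) (a,u1) (a,u2)).2 in H3 S3 *.
set Z1 := val (zeval t1 u0 u1 u2) in H1 S1 *.
set Z2 := val (zeval t2 u0 u1 u2) in H2 S2 *.
set Z3 := val (zeval t3 u0 u1 u2) in H3 S3 *.
set D := fun a => lx (lx (E1 a) Z1) (lx (lx (E2 a) Z2) (lx (E3 a) Z3)).
set A := zsN Z1 Z2 Z3.
set B := bxN Z1 Z2 Z3.
have HE : forall a : 'I_n, val (eval (Op i t1 t2 t3) (a,u0) (a,u1) (a,u2)).2 =
    lx (lx B (if a == i then lx B A else 0)) (D a).
  move=> a; rewrite snd_op.
  have [L1a L1b'] := L1 (H1 a) (H2 a) (H3 a).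
  case: (a == i); rewrite ?zsE ?bxE.
    by rewrite L1a lxKC.
  by rewrite L1b' lxr0.
have HZ : val (zeval (Op i t1 t2 t3) u0 u1 u2) = A by rewrite /= zsE.
rewrite HZ; split.
  move=> a; rewrite HE; case: (a == i).
    rewrite lxKC lxC lxA lxx lx0 /D.
    by apply: hiD; [exact: H1 | apply: hiD; [exact: H2|exact: H3]].
  rewrite lxr0 -lxA (lxC (D a) A) lxA; apply: hiD; first by rewrite lxC; apply: P2.
  by apply: hiD; [exact: H1 | apply: hiD; [exact: H2|exact: H3]].
rewrite (eq_bigr _ (fun a _ => HE a)) big_shape // /D big_D // /E1 /E2 /E3 S1 S2 S3 !lxx ?lx0.
exact: lxr0.
Qed.

Definition o0 : 'I_4 := @Ordinal 4 0 isT.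
Definition o1 : 'I_4 := @Ordinal 4 1 isT.

Lemma Zstep (p1 p2 p3 q1 q2 q3 r1 r2 r3 : nat) : p2 < 4 -> q2 < 4 -> r2 < 4 ->
  zsN ((p1 + q1 + r1) %% 4) ((p2 + q2 + r2) %% 4) ((p3 + q3 + r3) %% 4) =
  (zsN p1 p2 p3 + zsN q1 q2 q3 + zsN r1 r2 r3) %% 4.
Proof. rewrite /zsN => *. lia. Qed.

Lemma Zinv n (t : term n) :
  val (zeval t o1 o1 o1) = (val (zeval t o1 o0 o0) + val (zeval t o0 o1 o0) + val (zeval t o0 o0 o1)) %% 4.
Proof.
elim: t => [[[|[|[|k]]] Hk] //|i t1 IH1 t2 IH2 t3 IH3] /=.
by rewrite !zsE IH1 IH2 IH3 Zstep ?ltn_ord.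
Qed.

Theorem proposition5p4 (n : nat) (hodd : odd n) (hn : 1 < n) :
  ~ (exists t : term n, is_minority_term t).
Proof.
move=> [t Ht].
have key : forall u0 u1 u2 w : 'I_4,
    (forall a : 'I_n, eval t (a,u0) (a,u1) (a,u2) = (a, w)) -> val (zeval t u0 u1 u2) = val w.
  move=> u0 u1 u2 w Hw.
  have [_ <-] := main hodd t u0 u1 u2.
  by rewrite (eq_bigr (fun _ => val w)) ?big_constlx // => a _; rewrite Hw.
have h100 : val (zeval t o1 o0 o0) = 1.
  by apply: (key _ _ _ o1) => a; have [-> _ _] := Ht (a, o0) (a, o1).
have h010 : val (zeval t o0 o1 o0) = 1.
  by apply: (key _ _ _ o1) => a; have [_ -> _] := Ht (a, o0) (a, o1).
have h001 : val (zeval t o0 o0 o1) = 1.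
  by apply: (key _ _ _ o1) => a; have [_ _ ->] := Ht (a, o0) (a, o1).
have h111 : val (zeval t o1 o1 o1) = 1.
  by apply: (key _ _ _ o1) => a; have [-> _ _] := Ht (a, o1) (a, o1).
by move: (Zinv t); rewrite h100 h010 h001 h111.
Qed.
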